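(* Let $\Phi_D$ be a set of BS indices containing $0$, $\Psi_D=\Phi_D\setminus\{0\}$, $K\ge1$, $\tau_c>0$, $B_W>0$, and positive $p_{l'i},q_{l'i},\beta_{0l'i}$ ($l'\in\Phi_D$, $i=1,\dots,K$), with $k$ fixed, and define $$\mathrm{SIR}_{rp}=\frac{p_{0k}\beta_{00k}}{\frac1{\tau_c}\sum_{l'\in\Psi_D}\sum_{i=1}^K\frac{p_{l'i}q_{l'i}}{q_{0k}}\frac{\beta_{0l'i}^2}{\beta_{00k}}}.$$ The asymptotic ($M\to\infty$) regular-pilot rate $R^{a\text{-}rp}_{0k}=(1-\frac{\tau_p}{\tau_c})B_W\log_2\big(1+\frac{p_{0k}\beta_{00k}}{\frac1{\tau_p}\sum_{l'\in\Psi_D}\sum_{i=1}^K\frac{p_{l'i}q_{l'i}}{q_{0k}}\frac{\beta_{0l'i}^2}{\beta_{00k}}}\big)$, written as a function of $\zeta=\tau_p/\tau_c\in[0,1]$, is $f(\zeta)=B_W(1-\zeta)\log_2(1+\zeta\,\mathrm{SIR}_{rp})$. If $\mathrm{SIR}_{rp}>0$, then $f$ is concave on $[0,1]$ and its maximum over $[0,1]$ is attained at $$\zeta^{\max}=\frac{1}{\mathrm{SIR}_{rp}}\Big(\frac{1+\mathrm{SIR}_{rp}}{W\big((1+\mathrm{SIR}_{rp})e\big)}-1\Big)\in(0,1),$$ where $W$ is the Lambert $W$ function and $e$ is the base of the natural logarithm.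
   Context: The Lambert $W$ function is defined by $z=W(z)e^{W(z)}$ (principal branch for positive arguments). $\tau_p$ is the regular-pilot length, $\tau_c$ the coherence block length, $p_{l'i},q_{l'i}$ data and pilot powers of user $i$ in cell $l'$, $\beta_{0l'i}$ its large-scale fading coefficient to BS $0$. *)

(* Defs.v *)
From Stdlib Require Import Reals Lra List Arith ClassicalEpsilon.
Open Scope R_scope.

Definition lsum {A : Type} (s : list A) (F : A -> R) : R :=
  fold_right Rplus 0 (map F s).

Definition log2 (x : R) : R := ln x / ln 2.

(* Lambert W, principal branch: the w >= -1 with w e^w = z
   (unique for z >= -1/e, in particular for positive z). *)
Definition LambertW (z : R) : R :=
  epsilon (inhabits 0) (fun w => -1 <= w /\ w * exp w = z).

Definition PsiD (PhiD : list nat) : list nat :=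
  filter (fun l => negb (Nat.eqb l 0)) PhiD.

Definition users (K : nat) : list nat := seq 1 K.

(* Pilot contamination sum  sum_{l' in Psi_D} sum_{i=1}^K
   p_{l'i} q_{l'i}/q_{0k} * beta_{0l'i}^2 / beta_{00k};
   p l i, q l i, beta l i denote p_{li}, q_{li}, beta_{0li}. *)
Definition contam (PhiD : list nat) (K k : nat) (p q beta : nat -> nat -> R) : R :=
  lsum (PsiD PhiD) (fun l => lsum (users K) (fun i =>
     p l i * q l i / q 0%nat k * (beta l i ^ 2 / beta 0%nat k))).

Definition SIR_rp (PhiD : list nat) (K k : nat) (p q beta : nat -> nat -> R)
  (tau_c : R) : R :=
  p 0%nat k * beta 0%nat k / (/ tau_c * contam PhiD K k p q beta).

Definition rate_arp (PhiD : list nat) (K k : nat) (p q beta : nat -> nat -> R)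
  (tau_c B_W tau_p : R) : R :=
  (1 - tau_p / tau_c) * B_W *
  log2 (1 + p 0%nat k * beta 0%nat k / (/ tau_p * contam PhiD K k p q beta)).

Definition f_rp (B_W SIR zeta : R) : R := B_W * (1 - zeta) * log2 (1 + zeta * SIR).

Definition concave_on (a b : R) (g : R -> R) : Prop :=
  forall x y t, a <= x <= b -> a <= y <= b -> 0 <= t <= 1 ->
    t * g x + (1 - t) * g y <= g (t * x + (1 - t) * y).

(* Main.v *)
From Pilot Require Import Defs.
From Stdlib Require Import Reals List Lra ClassicalEpsilon.
Open Scope R_scope.

Lemma ln_le_xm1 (u : R) : 0 < u -> ln u <= u - 1.
Proof.
  intros Hu.
  assert (H : u <= exp (u - 1)) by (pose proof (exp_ineq1_le (u - 1)); lra).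
  destruct (Rle_lt_or_eq_dec _ _ H) as [Hl|He].
  - pose proof (ln_increasing _ _ Hu Hl) as Hh. rewrite ln_exp in Hh. lra.
  - rewrite He, ln_exp. lra.
Qed.

Definition hh (s x : R) := (1 - x) * ln (1 + x * s).
Definition dd (s x : R) := - ln (1 + x * s) + s * (1 - x) / (1 + x * s).

Lemma tangent (s x y : R) : 0 < s -> 0 <= x -> 0 <= y <= 1 ->
  hh s y <= hh s x + dd s x * (y - x).
Proof.
  intros Hs Hx Hy. unfold hh, dd.
  assert (Ax : 0 < 1 + x * s) by nra.
  assert (Ay : 0 < 1 + y * s) by nra.
  assert (Hu : 0 < (1 + y * s) / (1 + x * s)) by (apply Rdiv_lt_0_compat; lra).
  assert (Hsplit : ln (1 + y * s) = ln (1 + x * s) + ln ((1 + y * s) / (1 + x * s))).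
  { rewrite <- ln_mult by lra. f_equal. field. lra. }
  pose proof (ln_le_xm1 _ Hu) as Hl.
  assert (Heq : (1 + y * s) / (1 + x * s) - 1 = s * (y - x) / (1 + x * s)) by (field; lra).
  rewrite Heq in Hl.
  assert (H1 : (1 - y) * ln ((1 + y * s) / (1 + x * s)) <= (1 - y) * (s * (y - x) / (1 + x * s)))
    by (apply Rmult_le_compat_l; lra).
  assert (H2 : (1 - y) * (s * (y - x) / (1 + x * s)) - s * (1 - x) / (1 + x * s) * (y - x)
              = - (s * (y - x) * (y - x)) / (1 + x * s)) by (field; lra).
  assert (H3 : - (s * (y - x) * (y - x)) / (1 + x * s) <= 0).
  { unfold Rdiv. assert (0 < / (1 + x * s)) by (apply Rinv_0_lt_compat; lra).
    assert (0 <= s * (y - x) * (y - x)) by (rewrite Rmult_assoc; apply Rmult_le_pos; [lra | apply Rle_0_sqr]).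
    assert (0 <= s * (y - x) * (y - x) * / (1 + x * s)) by (apply Rmult_le_pos; lra).
    replace (- (s * (y - x) * (y - x)) * / (1 + x * s)) with (- (s * (y - x) * (y - x) * / (1 + x * s))) by ring.
    lra. }
  rewrite Hsplit.
  set (Lx := ln (1 + x * s)) in *. set (Lu := ln ((1 + y * s) / (1 + x * s))) in *.
  set (Q := s * (1 - x) / (1 + x * s)) in *. set (R1 := s * (y - x) / (1 + x * s)) in *.
  set (R2 := - (s * (y - x) * (y - x)) / (1 + x * s)) in *.
  assert (E : (1 - x) * Lx + (- Lx + Q) * (y - x) - (1 - y) * (Lx + Lu)
              = Q * (y - x) - (1 - y) * Lu) by ring.
  lra.
Qed.

Lemma f_hh (B s z : R) : f_rp B s z = B / ln 2 * hh s z.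
Proof. unfold f_rp, hh, log2. field. pose proof ln_lt_2. lra. Qed.

Theorem corollary3 (PhiD : list nat) (K k : nat) (p q beta : nat -> nat -> R)
  (tau_c B_W : R) :
  In 0%nat PhiD -> NoDup PhiD ->
  (1 <= K)%nat -> (1 <= k <= K)%nat ->
  0 < tau_c -> 0 < B_W ->
  (forall l i, In l PhiD -> (1 <= i <= K)%nat ->
     0 < p l i /\ 0 < q l i /\ 0 < beta l i) ->
  0 < SIR_rp PhiD K k p q beta tau_c ->
  let SIR := SIR_rp PhiD K k p q beta tau_c in
  let f := f_rp B_W SIR in
  let zmax := / SIR * ((1 + SIR) / LambertW ((1 + SIR) * exp 1) - 1) in
  (forall tau_p, 0 < tau_p <= tau_c ->
     rate_arp PhiD K k p q beta tau_c B_W tau_p = f (tau_p / tau_c)) /\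
  concave_on 0 1 f /\
  (0 < zmax < 1) /\
  (forall z, 0 <= z <= 1 -> f z <= f zmax).
Proof.
  intros _ _ _ _ Htc HB _ HS SIR f zmax.
  assert (Hl2 : 0 < ln 2) by (pose proof ln_lt_2; lra).
  assert (Hc : 0 < B_W / ln 2) by (apply Rdiv_lt_0_compat; lra).
  set (s := SIR) in *.
  assert (Hs : 0 < s) by exact HS.
  set (w := LambertW ((1 + s) * exp 1)).
  assert (Hex : exists w0, -1 <= w0 /\ w0 * exp w0 = (1 + s) * exp 1).
  { assert (Hcont : continuity (fun v => v * exp v - (1 + s) * exp 1)).
    { apply continuity_minus.
      - apply continuity_mult.
        + apply derivable_continuous, derivable_id.
        + apply derivable_continuous, derivable_exp.
      - apply continuity_const. intros a b; reflexivity. }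
    assert (E1 : exp 1 < exp (1 + s)) by (apply exp_increasing; lra).
    pose proof (exp_pos 1).
    destruct (IVT _ 1 (1 + s) Hcont ltac:(lra) ltac:(nra) ltac:(nra)) as [z [Hz1 Hz2]].
    exists z. split; lra. }
  assert (HW : -1 <= w /\ w * exp w = (1 + s) * exp 1)
    by (unfold w, LambertW; apply epsilon_spec; exact Hex).
  destruct HW as [Hw1 Hw2].
  assert (He1 : 0 < exp 1) by apply exp_pos.
  assert (Hwgt : 1 < w).
  { destruct (Rle_or_lt w 1) as [Hle|]; [|lra].
    exfalso. pose proof (exp_pos w).
    destruct (Rle_or_lt w 0).
    - nra.
    - assert (exp w <= exp 1).
      { destruct (Rle_lt_or_eq_dec _ _ Hle) as [Hl|Hq].
        + left; apply exp_increasing; lra.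
        + rewrite Hq; lra. }
      nra. }
  assert (Hwlt : w < 1 + s).
  { destruct (Rle_or_lt (1 + s) w) as [Hle|]; [|lra].
    exfalso.
    assert (E1 : exp 1 < exp (1 + s)) by (apply exp_increasing; lra).
    assert (exp (1 + s) <= exp w).
    { destruct (Rle_lt_or_eq_dec _ _ Hle) as [Hl|Hq].
      + left; apply exp_increasing; lra.
      + rewrite Hq; lra. }
    nra. }
  assert (Hlnw : ln w + w = ln (1 + s) + 1).
  { rewrite <- (ln_exp w) at 2. rewrite <- ln_mult by (try apply exp_pos; lra).
    rewrite Hw2, ln_mult by lra. rewrite ln_exp. reflexivity. }
  assert (Hz : zmax = / s * ((1 + s) / w - 1)) by reflexivity.
  assert (Hzm : 0 < zmax < 1).
  { rewrite Hz. split.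
    - apply Rmult_lt_0_compat. apply Rinv_0_lt_compat; lra.
      assert (1 < (1 + s) / w).
      { apply (Rmult_lt_reg_r w); [lra|]. unfold Rdiv. rewrite Rmult_assoc, Rinv_l by lra. lra. }
      lra.
    - assert ((1 + s) / w < 1 + s).
      { apply (Rmult_lt_reg_r w); [lra|]. unfold Rdiv. rewrite Rmult_assoc, Rinv_l by lra. nra. }
      apply (Rmult_lt_reg_l s); [lra|]. rewrite <- Rmult_assoc, Rinv_r by lra. lra. }
  assert (Hd0 : dd s zmax = 0).
  { unfold dd.
    assert (E : 1 + zmax * s = (1 + s) / w) by (rewrite Hz; field; lra).
    rewrite E. unfold Rdiv at 1. rewrite ln_mult by (try apply Rinv_0_lt_compat; lra).
    rewrite ln_Rinv by lra.
    assert (E2 : s * (1 - zmax) / ((1 + s) / w) = w - 1).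
    { rewrite Hz. field. repeat split; lra. }
    rewrite E2. lra. }
  split; [|split; [|split]].
  - intros tp Htp. unfold f. rewrite f_hh. unfold rate_arp, hh, log2.
    unfold s, SIR, SIR_rp in *.
    set (C := contam PhiD K k p q beta) in *.
    assert (HC : C <> 0).
    { intro H0. rewrite H0, Rmult_0_r in HS. unfold Rdiv in HS. rewrite Rinv_0, Rmult_0_r in HS. lra. }
    replace (p 0%nat k * beta 0%nat k / (/ tp * C)) with
      (tp / tau_c * (p 0%nat k * beta 0%nat k / (/ tau_c * C))) by (field; repeat split; lra).
    field. lra.
  - intros x y t Hx Hy Ht. unfold f. rewrite !f_hh.
    set (m := t * x + (1 - t) * y).
    assert (Hm : 0 <= m) by (unfold m; nra).
    pose proof (tangent s m x Hs Hm Hx) as T1.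
    pose proof (tangent s m y Hs Hm Hy) as T2.
    assert (A1 : t * hh s x <= t * (hh s m + dd s m * (x - m))) by (apply Rmult_le_compat_l; lra).
    assert (A2 : (1 - t) * hh s y <= (1 - t) * (hh s m + dd s m * (y - m))) by (apply Rmult_le_compat_l; lra).
    assert (A3 : t * (hh s m + dd s m * (x - m)) + (1 - t) * (hh s m + dd s m * (y - m)) = hh s m)
      by (unfold m; ring).
    assert (A4 : t * hh s x + (1 - t) * hh s y <= hh s m) by lra.
    assert (A5 : t * (B_W / ln 2 * hh s x) + (1 - t) * (B_W / ln 2 * hh s y)
                 = B_W / ln 2 * (t * hh s x + (1 - t) * hh s y)) by ring.
    rewrite A5. apply Rmult_le_compat_l; lra.
  - exact Hzm.
  - intros z Hz1. unfold f. rewrite !f_hh. apply Rmult_le_compat_l; [lra|].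
    pose proof (tangent s zmax z Hs ltac:(lra) Hz1). rewrite Hd0 in H. lra.
Qed.
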